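(* Let $T\in\mathrm{Aut}_1(X,\mathcal{A},\mu)$. If $T$ is conservative, then $\chi(T)=0$.
   Context: $(X,\mathcal{A},\mu)$ is a standard $\sigma$-finite non-atomic measure space. For an invertible nonsingular $T$, $T':=\frac{d\mu\circ T^{-1}}{d\mu}$; $\mathrm{Aut}_1(X,\mathcal{A},\mu)$ is the group of invertible nonsingular $T$ with $T'-1\in L^1(\mu)$, and $\chi(T):=\int_X(T'-1)\,d\mu$. $T$ is conservative if for every $A\in\mathcal A$ with $\mu(A)>0$ there is $n>0$ with $\mu(T^{-n}A\cap A)>0$. *)

(* Defs.v *)
From HB Require Import structures.
From mathcomp Require Import all_boot all_order all_algebra.
From mathcomp Require Import all_classical all_reals all_analysis.
From mathcomp Require Import measurable_realfun lebesgue_measure lebesgue_integral.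
Set Implicit Arguments. Unset Strict Implicit. Unset Printing Implicit Defensive.
Import Order.TTheory GRing.Theory Num.Theory.
Local Open Scope classical_set_scope.
Local Open Scope ring_scope.

(* Standard (Borel) measurable space: X is Borel isomorphic to a Borel subset
   of the real line R (with its Borel sigma-algebra). *)
Definition standard_space (d : measure_display) (X : measurableType d)
  (R : realType) : Prop :=
  exists f : X -> R,
    [/\ injective f, measurable_fun [set: X] f, measurable (range f)
      & forall A : set X, measurable A -> measurable (f @` A)].

Definition non_atomic (d : measure_display) (X : measurableType d)
  (R : realType) (mu : set X -> \bar R) : Prop :=
  forall A : set X, measurable A -> (0 < mu A)%E ->
    exists B : set X, [/\ measurable B, B `<=` A, (0 < mu B)%E & (mu B < mu A)%E].

Definition invertible_nonsingular (d : measure_display) (X : measurableType d)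
  (R : realType) (mu : set X -> \bar R) (T Tinv : X -> X) : Prop :=
  [/\ cancel T Tinv, cancel Tinv T,
      measurable_fun [set: X] T, measurable_fun [set: X] Tinv
    & forall A : set X, measurable A -> (mu (T @^-1` A) = 0 <-> mu A = 0)%E].

Definition is_RN_deriv (d : measure_display) (X : measurableType d)
  (R : realType) (nu : set X -> \bar R) (mu : {measure set X -> \bar R})
  (f : X -> \bar R) : Prop :=
  [/\ measurable_fun [set: X] f, (forall x, 0 <= f x)%E
    & forall A : set X, measurable A -> nu A = (\int[mu]_(x in A) f x)%E].

Definition conservative (d : measure_display) (X : measurableType d)
  (R : realType) (mu : set X -> \bar R) (T : X -> X) : Prop :=
  forall A : set X, measurable A -> (0 < mu A)%E ->
    exists n : nat, (0 < n)%N /\ (0 < mu ((iter n T) @^-1` A `&` A))%E.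

(* Main.v *)
Require Import Defs.
From HB Require Import structures.
From mathcomp Require Import all_boot all_order all_algebra.
From mathcomp Require Import all_classical all_reals all_analysis.
From mathcomp Require Import measurable_realfun lebesgue_measure lebesgue_integral.
From mathcomp Require Import lra.
Import Order.TTheory GRing.Theory Num.Theory.
Local Open Scope classical_set_scope.
Local Open Scope ring_scope.
Section Prop44.
Local Open Scope ereal_scope.
Context (d : measure_display) (X : measurableType d) (R : realType)
  (mu : {sigma_finite_measure set X -> \bar R}) (T Tinv : X -> X) (Tprime : X -> \bar R).
Hypotheses (TK : cancel T Tinv) (TinvK : cancel Tinv T)
  (mT : measurable_fun [set: X] T) (mTinv : measurable_fun [set: X] Tinv)
  (ns : forall A : set X, measurable A -> (mu (T @^-1` A) = 0 <-> mu A = 0))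
  (mTp : measurable_fun [set: X] Tprime) (Tp0 : forall x, 0 <= Tprime x)
  (RN : forall A : set X, measurable A -> mu (T @^-1` A) = \int[mu]_(x in A) Tprime x)
  (intf : mu.-integrable [set: X] (fun x => Tprime x - 1%:E))
  (cons : conservative mu T).

Let f x := Tprime x - 1%:E.
Let G := \int[mu]_x `|f x|.

Lemma mpre A : measurable A -> measurable (T @^-1` A).
Proof. by move=> mA; rewrite -[_ @^-1` _]setTI; exact: mT. Qed.
Lemma mpreinv A : measurable A -> measurable (Tinv @^-1` A).
Proof. by move=> mA; rewrite -[_ @^-1` _]setTI; exact: mTinv. Qed.

Lemma mf : measurable_fun setT f.
Proof. by case/integrableP: intf. Qed.
Lemma mabsf : measurable_fun setT (fun x => `|f x|).
Proof. exact: measurableT_comp mf. Qed.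
Lemma Gfin : G \is a fin_num.
Proof.
case/integrableP: intf => _ h; rewrite ge0_fin_numE //.
exact: integral_ge0.
Qed.
Lemma G0 : 0 <= G.
Proof. exact: integral_ge0. Qed.
Lemma intS B : measurable B -> \int[mu]_(x in B) `|f x| <= G.
Proof.
move=> mB; apply: ge0_subset_integral => //; exact: mabsf.
Qed.

Lemma pw1 x : Tprime x <= `|f x| + 1.
Proof.
rewrite /f; have := Tp0 x; case: (Tprime x) => [r| |] //= _.
rewrite lee_fin; have := ler_norm (r - 1); lra.
Qed.

Lemma pw2 x : 1 <= Tprime x + `|f x|.
Proof.
rewrite /f; have := Tp0 x; case: (Tprime x) => [r| |] //= _.
  by rewrite lee_fin; have h := ler_norm (1 - r); rewrite distrC in h; lra.
  by rewrite leey.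
Qed.

Lemma fin_pre B : measurable B -> mu B < +oo -> mu (T @^-1` B) < +oo.
Proof.
move=> mB muB; rewrite RN //.
apply: (@le_lt_trans _ _ (\int[mu]_(x in B) (`|f x| + 1))).
  apply: ge0_le_integral => //.
  - exact: measurable_funS mTp.
  - apply: emeasurable_funD; [exact: measurable_funS mabsf| exact: measurable_cst].
  - by move=> x _; exact: pw1.
rewrite ge0_integralD //; last exact: measurable_funS mabsf.
rewrite integral_cst // mul1e lte_add_pinfty //.
by rewrite (le_lt_trans (intS _ mB)) // ltey_eq Gfin.
Qed.

Lemma le_mu B : measurable B -> mu B <= mu (T @^-1` B) + G.
Proof.
move=> mB; rewrite RN //.
apply: (@le_trans _ _ (\int[mu]_(x in B) (Tprime x + `|f x|))).
  rewrite -[mu B]mul1e -(@integral_cst _ _ _ mu B mB 1).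
  apply: ge0_le_integral => //.
  - apply: emeasurable_funD; [exact: measurable_funS mTp| exact: measurable_funS mabsf].
  - by move=> x _; exact: pw2.
rewrite ge0_integralD //; last 2 first.
  - exact: measurable_funS mTp.
  - exact: measurable_funS mabsf.
by rewrite leeD2l // (intS _ mB).
Qed.

Lemma preTTinv B : T @^-1` (Tinv @^-1` B) = B.
Proof. by apply/seteqP; split => x /=; rewrite TK. Qed.

Lemma fin_preinv B : measurable B -> mu B < +oo -> mu (Tinv @^-1` B) < +oo.
Proof.
move=> mB muB; apply: (le_lt_trans (le_mu _ (mpreinv _ mB))).
by rewrite preTTinv lte_add_pinfty // ltey_eq Gfin.
Qed.

Fixpoint Eit (S : X -> X) (A : set X) (n : nat) : set X :=
  if n is m.+1 then A `|` S @^-1` Eit S A m else A.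

Lemma mEit S A n : (forall B, measurable B -> measurable (S @^-1` B)) ->
  measurable A -> measurable (Eit S A n).
Proof.
move=> mS mA; elim: n => [|n IH] //=; exact: measurableU (mS _ IH).
Qed.

Lemma Eit_step S A n : Eit S A n `<=` Eit S A n.+1.
Proof.
elim: n => [|n IH] /=; first by move=> x Ax; left.
by move=> x [Ax|Hx]; [left|right; apply: IH].
Qed.

Lemma Eit_nd S A : {homo Eit S A : n m / (n <= m)%N >-> (n <= m)%O}.
Proof. by apply/nondecreasing_seqP => n; rewrite subsetEset; exact: Eit_step. Qed.

Lemma iterA S A n x : A (iter n S x) -> Eit S A n x.
Proof.
elim: n x => [|n IH] x //=; rewrite -iterS iterSr => h.
by right; exact: IH.
Qed.

Lemma finE A n : measurable A -> mu A < +oo -> mu (Eit T A n) < +oo.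
Proof.
move=> mA muA; elim: n => [|n IH] //=.
apply: (le_lt_trans (measureU2 mu mA (mpre _ (mEit T A n mpre mA)))).
by rewrite lte_add_pinfty // (fin_pre _ (mEit T A n mpre mA) IH).
Qed.

Lemma finD A n : measurable A -> mu A < +oo -> mu (Eit Tinv A n) < +oo.
Proof.
move=> mA muA; elim: n => [|n IH] //=.
apply: (le_lt_trans (measureU2 mu mA (mpreinv _ (mEit Tinv A n mpreinv mA)))).
by rewrite lte_add_pinfty // (fin_preinv _ (mEit Tinv A n mpreinv mA) IH).
Qed.

Lemma cons0 B : measurable B ->
  (forall n x, (0 < n)%N -> B x -> B (iter n T x) -> False) -> mu B = 0.
Proof.
move=> mB hB; apply/eqP; rewrite eq_le measure_ge0 andbT leNgt; apply/negP => B0.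
have [n [n0 h]] := cons _ mB B0.
have E0 : iter n T @^-1` B `&` B = set0.
  by apply/seteqP; split => // x [h1 h2]; exact: (hB n x n0 h2 h1).
by rewrite E0 measure0 ltxx in h.
Qed.

Lemma iterK n x : iter n Tinv (iter n T x) = x.
Proof. by elim: n x => [|n IH] x //=; rewrite -(iterS n Tinv) iterSr TK IH. Qed.

Lemma lower_cvg A : measurable A -> mu A < +oo ->
  (fun N => mu (A `\` T @^-1` Eit T A N)) @ \oo --> (0 : \bar R).
Proof.
move=> mA muA.
set F := fun N => A `\` T @^-1` Eit T A N.
have mF : forall N, measurable (F N).
  by move=> N; apply: measurableD mA (mpre _ (mEit T A N mpre mA)).
have ni : {homo F : n m / (n <= m)%N >-> (m <= n)%O}.
  apply/nonincreasing_seqP => n; rewrite subsetEset => x [Ax nE]; split => //.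
  by move=> h; apply: nE; exact: Eit_step.
have F0 : mu (F 0%N) < +oo.
  apply: le_lt_trans muA; rewrite le_measure ?inE //.
  by move=> x [].
suff H0 : mu (\bigcap_n F n) = 0.
  apply: cvg_trans (nonincreasing_cvg_mu F0 mF (bigcapT_measurable mF) ni) _.
  suff: forall z : \bar R, z = 0 -> nbhs z --> nbhs (0 : \bar R) by apply; exact: H0.
  by move=> z ->; exact: cvg_refl.
pose B := A `\` \bigcup_N T @^-1` Eit T A N.
have mB : measurable B.
  rewrite /B; apply: measurableD => //; apply: bigcupT_measurable => N.
  exact: mpre _ (mEit T A N mpre mA).
apply: (subset_measure0 (bigcapT_measurable mF) mB).
  move=> x hx; split; first by case: (hx 0%N I).
  by move=> [N _ hN]; case: (hx N I).
apply: (cons0 _ mB) => n x n0 [Ax nx] [Anx _].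
case: n n0 Anx => [//|m] _; rewrite iterSr => /iterA h.
by apply: nx; exists m.
Qed.

Lemma upper_cvg A : measurable A -> mu A < +oo ->
  (fun N => mu (T @^-1` A `\` Eit Tinv A N)) @ \oo --> (0 : \bar R).
Proof.
move=> mA muA.
set F := fun N => T @^-1` A `\` Eit Tinv A N.
have mF : forall N, measurable (F N).
  by move=> N; apply: measurableD (mpre _ mA) (mEit Tinv A N mpreinv mA).
have ni : {homo F : n m / (n <= m)%N >-> (m <= n)%O}.
  apply/nonincreasing_seqP => n; rewrite subsetEset => x [Ax nE]; split => //.
  by move=> h; apply: nE; exact: Eit_step.
have F0 : mu (F 0%N) < +oo.
  apply: le_lt_trans (fin_pre _ mA muA); rewrite le_measure ?inE //.
  - exact: mpre.
  - by move=> x [].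
suff H0 : mu (\bigcap_n F n) = 0.
  apply: cvg_trans (nonincreasing_cvg_mu F0 mF (bigcapT_measurable mF) ni) _.
  suff: forall z : \bar R, z = 0 -> nbhs z --> nbhs (0 : \bar R) by apply; exact: H0.
  by move=> z ->; exact: cvg_refl.
pose B := A `\` \bigcup_N Tinv @^-1` Eit Tinv A N.
have mB : measurable B.
  rewrite /B; apply: measurableD => //; apply: bigcupT_measurable => N.
  exact: mpreinv _ (mEit Tinv A N mpreinv mA).
have B0 : mu B = 0.
  apply: (cons0 _ mB) => n x n0 [Ax nx] [Anx ny].
  apply: ny; case: n n0 Anx => [//|m] _ _; exists m => //=.
  apply: iterA; rewrite -iterSr iterK //.
have TB0 : mu (T @^-1` B) = 0 by apply/ns.
apply: (subset_measure0 (bigcapT_measurable mF) (mpre _ mB) _ TB0).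
move=> x hx; split; first by case: (hx 0%N I).
by move=> [N _ /=]; rewrite TK => hN; case: (hx N I).
Qed.

Lemma int1 S : measurable S -> mu S < +oo -> mu.-integrable S (cst 1).
Proof.
move=> mS muS; apply/integrableP; split; first exact: measurable_cst.
rewrite (eq_integral (cst 1)); last by move=> x _; rewrite /= ?normr1.
by rewrite integral_cst // mul1e.
Qed.

Lemma intTp S : measurable S -> mu (T @^-1` S) < +oo -> mu.-integrable S Tprime.
Proof.
move=> mS muS; apply/integrableP; split; first exact: measurable_funS mTp.
rewrite (eq_integral Tprime); last by move=> x _; rewrite gee0_abs.
by rewrite -RN.
Qed.

Lemma Jeq S : measurable S -> mu S < +oo -> mu (T @^-1` S) < +oo ->
  \int[mu]_(x in S) f x = mu (T @^-1` S) - mu S.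
Proof.
move=> mS h0 h1.
rewrite (eq_integral (Tprime \- cst 1)) // integralB //; last 2 first.
  - exact: intTp.
  - exact: int1.
by rewrite -RN // integral_cst // mul1e.
Qed.

Lemma splitI S A : measurable S -> measurable A -> A `<=` S ->
  \int[mu]_x f x = \int[mu]_(x in S) f x + \int[mu]_(x in ~` S) f x /\
  `| \int[mu]_(x in ~` S) f x | + \int[mu]_(x in A) `|f x| <= G.
Proof.
move=> mS mA AS; split.
  rewrite -(setUv S) integral_setU //.
  - exact: measurableC.
  - by rewrite setUv; exact: mf.
  - by rewrite disj_set2E setICr.
have eG : G = \int[mu]_(x in A) `|f x| + \int[mu]_(x in ~` A) `|f x|.
  rewrite /G -(setUv A) ge0_integral_setU //.
  - exact: measurableC.
  - by rewrite setUv; exact: mabsf.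
  - by rewrite disj_set2E setICr.
rewrite eG addeC; apply: leeD => //.
apply: le_trans (le_abse_integral mu (measurableC mS) (measurable_funS _ _ mf)) _.
- exact: measurableT.
- by [].
apply: ge0_subset_integral => //.
- exact: measurableC.
- exact: measurableC.
- exact: measurable_funS mabsf.
by move=> x nSx Ax; apply: nSx; exact: AS.
Qed.

Lemma real_lower (i j k a g m0 m1 dl : R) :
  i%:E = j%:E + k%:E -> `|k%:E| + a%:E <= g%:E -> j%:E = m1%:E - m0%:E ->
  m0%:E <= m1%:E + dl%:E -> (a - g - i)%:E <= dl%:E.
Proof.
move=> [->] /=; rewrite -EFinD lee_fin => hk [->]; rewrite -EFinD !lee_fin => hm.
have h1 := ler_norm (- k); rewrite normrN in h1; lra.
Qed.

Lemma real_upper (i j k a g m0 m1 dl : R) :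
  i%:E = j%:E + k%:E -> `|k%:E| + a%:E <= g%:E -> j%:E = m1%:E - m0%:E ->
  m1%:E <= m0%:E + dl%:E -> (a - g + i)%:E <= dl%:E.
Proof.
move=> [->] /=; rewrite -EFinD lee_fin => hk [->]; rewrite -EFinD !lee_fin => hm.
have h1 := ler_norm k; lra.
Qed.

Lemma A_sub S A n : A `<=` Eit S A n.
Proof. by case: n => [|n] x Ax //=; left. Qed.

Lemma finI : (\int[mu]_x f x) \is a fin_num.
Proof. by apply: (integrable_fin_num (mu:=mu) measurableT). Qed.

Lemma fin_intA A : measurable A -> (\int[mu]_(x in A) `|f x|) \is a fin_num.
Proof.
move=> mA; rewrite ge0_fin_numE; last exact: integral_ge0.
by rewrite (le_lt_trans (intS _ mA)) // ltey_eq Gfin.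
Qed.

Lemma fin_intC S : measurable S -> (\int[mu]_(x in ~` S) f x) \is a fin_num.
Proof.
move=> mS; apply: integrable_fin_num; first exact: measurableC.
by apply: integrableS intf => //; exact: measurableC.
Qed.

Lemma mufin B : mu B < +oo -> mu B \is a fin_num.
Proof. by move=> h; rewrite ge0_fin_numE. Qed.

Lemma lowerA A : measurable A -> mu A < +oo ->
  (fine (\int[mu]_(x in A) `|f x|) - fine G - fine (\int[mu]_x f x) <= 0)%R.
Proof.
move=> mA muA; rewrite -lee_fin.
apply: (cvge_to_ge (lower_cvg _ mA muA)); apply: nearW => N.
set S := Eit T A N.
have mS : measurable S by exact: mEit mpre mA.
have f0 := finE _ N mA muA; have f1 := fin_pre _ mS f0.
have mD : measurable (A `\` T @^-1` S) by apply: measurableD mA (mpre _ mS).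
have fd : mu (A `\` T @^-1` S) \is a fin_num.
  by rewrite ge0_fin_numE // (le_lt_trans _ muA) // le_measure ?inE //; move=> x [].
have [eI hK] := splitI _ _ mS mA (A_sub T A N).
have eJ := Jeq _ mS f0 f1.
have hm : mu S <= mu (T @^-1` S) + mu (A `\` T @^-1` S).
  apply: le_trans (measureU2 mu (mpre _ mS) mD).
  rewrite le_measure ?inE //; first exact: measurableU (mpre _ mS) mD.
  move=> x Sx; have := Eit_step T A N x Sx; rewrite /= => -[Ax|TSx].
    by case: (pselect ((T @^-1` S) x)) => h; [left|right].
  by left.
have fJ : (\int[mu]_(x in S) f x) \is a fin_num.
  by rewrite eJ fin_numB !mufin.
rewrite -(fineK fd); apply: (@real_lower _ (fine (\int[mu]_(x in S) f x))
  (fine (\int[mu]_(x in ~` S) f x)) _ _ (fine (mu S)) (fine (mu (T @^-1` S)))).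
- by rewrite !fineK // ?finI ?fin_intC.
- by rewrite !fineK // ?Gfin ?fin_intA ?fin_intC.
- by rewrite !fineK // mufin.
- by rewrite !fineK // mufin.
Qed.

Lemma upperA A : measurable A -> mu A < +oo ->
  (fine (\int[mu]_(x in A) `|f x|) - fine G + fine (\int[mu]_x f x) <= 0)%R.
Proof.
move=> mA muA; rewrite -lee_fin.
apply: (cvge_to_ge (upper_cvg _ mA muA)); apply: nearW => N.
set S := Eit Tinv A N.
have mS : measurable S by exact: mEit mpreinv mA.
have f0 := finD _ N mA muA; have f1 := fin_pre _ mS f0.
have mD : measurable (T @^-1` A `\` S) by apply: measurableD (mpre _ mA) mS.
have fd : mu (T @^-1` A `\` S) \is a fin_num.
  apply: mufin; apply: le_lt_trans (fin_pre _ mA muA).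
  by rewrite le_measure ?inE //; exact: mpre.
have [eI hK] := splitI _ _ mS mA (A_sub Tinv A N).
have eJ := Jeq _ mS f0 f1.
have hm : mu (T @^-1` S) <= mu S + mu (T @^-1` A `\` S).
  apply: le_trans (measureU2 mu mS mD).
  rewrite le_measure ?inE //; try exact: mpre; try exact: measurableU mS mD.
  move=> x Sx; have := Eit_step Tinv A N (T x) Sx; rewrite /= => -[Ax|TSx].
    by case: (pselect (S x)) => h; [left|right].
  by left; rewrite TK in TSx.
have fJ : (\int[mu]_(x in S) f x) \is a fin_num.
  by rewrite eJ fin_numB !mufin.
rewrite -(fineK fd); apply: (@real_upper _ (fine (\int[mu]_(x in S) f x))
  (fine (\int[mu]_(x in ~` S) f x)) _ _ (fine (mu S)) (fine (mu (T @^-1` S)))).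
- by rewrite !fineK // ?finI ?fin_intC.
- by rewrite !fineK // ?Gfin ?fin_intA ?fin_intC.
- by rewrite !fineK // mufin.
- by rewrite !fineK // mufin.
Qed.

Fixpoint accU (F : nat -> set X) k : set X :=
  if k is k.+1 then accU F k `|` F k else set0.

Lemma main0 : \int[mu]_x f x = 0.
Proof.
have [F FE /all_and2[mF muF]] := sigma_finiteT mu.
have mAcc : forall k, measurable (accU F k).
  by elim => [|k IH] //=; exact: measurableU.
have fAcc : forall k, mu (accU F k) < +oo.
  elim => [|k IH] /=; first by rewrite measure0.
  by apply: (le_lt_trans (measureU2 mu (mAcc k) (mF k))); exact: lte_add_pinfty IH (muF k).
have nd : {homo accU F : n m / (n <= m)%N >-> (n <= m)%O}.
  by apply/nondecreasing_seqP => n; rewrite subsetEset => x Ax /=; left.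
have eU : \bigcup_k accU F k = setT.
  apply/seteqP; split => // x _.
  have : (\bigcup_i F i) x by rewrite -FE.
  by case=> i _ Fi; exists i.+1 => //=; right.
have h := ge0_nondecreasing_set_cvg_integral (mu := mu) (f := fun x => `|f x|) nd mAcc
  (fun k => measurable_funS measurableT (@subsetT _ _) mabsf) (fun _ _ _ => abse_ge0 _).
rewrite eU in h.
have fa k : (\int[mu]_(x in accU F k) `|f x|) = (fine (\int[mu]_(x in accU F k) `|f x|))%:E.
  by rewrite fineK // fin_intA.
have i0 : (0 <= fine (\int[mu]_x f x))%R.
  have : G <= (fine G + fine (\int[mu]_x f x))%:E.
    apply: (cvge_to_le h); apply: nearW => k; rewrite fa lee_fin.
    have := lowerA _ (mAcc k) (fAcc k); lra.
  by rewrite -[G](fineK Gfin) lee_fin; lra.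
have i1 : (fine (\int[mu]_x f x) <= 0)%R.
  have : G <= (fine G - fine (\int[mu]_x f x))%:E.
    apply: (cvge_to_le h); apply: nearW => k; rewrite fa lee_fin.
    have := upperA _ (mAcc k) (fAcc k); lra.
  by rewrite -[G](fineK Gfin) lee_fin; lra.
rewrite -(fineK finI); congr (_%:E); lra.
Qed.
End Prop44.

Theorem proposition4p4 (d : measure_display) (X : measurableType d)
  (R : realType) (mu : {sigma_finite_measure set X -> \bar R})
  (T Tinv : X -> X) (Tprime : X -> \bar R) :
  standard_space X R ->
  non_atomic mu ->
  invertible_nonsingular mu T Tinv ->
  is_RN_deriv (pushforward mu T) mu Tprime ->
  mu.-integrable [set: X] (fun x => Tprime x - 1%:E)%E ->
  conservative mu T ->
  (\int[mu]_x (Tprime x - 1%:E))%E = 0%E.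
Proof.
move=> _ _ [TK TinvK mT mTinv ns] [mTp Tp0 RN] intf cons.
exact: (@main0 d X R mu T Tinv Tprime TK mT mTinv ns mTp Tp0 RN intf cons).
Qed.
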